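(* Consider problem (PI): minimize $f(x)$ subject to $x\in X$, $g_i(x)\le 0$, $i=1,\dots,m$, where $\Gamma\subseteq\mathbb R^n$ is an open convex set, $X\subseteq\Gamma$ is convex (not necessarily open), and $f,g_1,\dots,g_m:\Gamma\to\mathbb R$ are differentiable and quasiconvex on $\Gamma$. Let $\bar S$ be the solution set of (PI) and $\bar x\in\bar S$. Suppose GMFCQ holds at $\bar x$ and $\lambda=(\lambda_1,\dots,\lambda_m)$ is a KKT multiplier at $\bar x$. Then $\bar S\subseteq X_1(\lambda)$, and the Lagrangian $L(\cdot)=f(\cdot)+\sum_{i\in I(\bar x)}\lambda_i g_i(\cdot)$ is constant on $\bar S$.
   Context: Quasiconvexity on $\Gamma$: $f(x+t(y-x))\le\max\{f(x),f(y)\}$ for all $x,y\in\Gamma$, $t\in[0,1]$. Feasible set $S:=\{x\in X\mid g_i(x)\le0,\ i=1,\dots,m\}$; $\bar S$ the set of global minimizers of $f$ on $S$. Active index set $I(x):=\{i\mid g_i(x)=0\}$. For a cone $C$, its negative polar is $C^*:=\{x\in\mathbb R^n\mid c^Tx\le 0\ \forall c\in C\}$; $T_X(x)$ is the tangent cone of $X$ at $x$ and $N_X(x):=(T_X(x))^*$ is the normal cone. GMFCQ holds at $\bar x$ iff there is $y\in (N_X(\bar x))^*$ with $\nabla g_i(\bar x)^Ty<0$ for all $i\in I(\bar x)$. A KKT multiplier at $\bar x$ is $\lambda\in\mathbb R^m$ with $\lambda_i\ge0$ for all $i$, $\lambda_ig_i(\bar x)=0$ for all $i$, and $\big[\nabla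 f(\bar x)+\sum_{i\in I(\bar x)}\lambda_i\nabla g_i(\bar x)\big]^T(x-\bar x)\ge0$ for all $x\in X$. Define $\tilde I(\bar x,\lambda):=\{i\mid g_i(\bar x)=0,\ \lambda_i>0\}$ and $X_1(\lambda):=\{x\in X\mid g_i(x)=0\ \forall i\in\tilde I(\bar x,\lambda),\ g_i(x)\le0\ \forall i\notin\tilde I(\bar x,\lambda)\}$. *)

(* Defs.v *)
From Stdlib Require Import Reals Lra.
From Stdlib Require Vectors.Fin.
Open Scope R_scope.

Definition vec (n : nat) := Fin.t n -> R.

Fixpoint sumF (n : nat) : (Fin.t n -> R) -> R :=
  match n with
  | O => fun _ => 0
  | S k => fun f => f Fin.F1 + sumF k (fun i => f (Fin.FS i))
  end.

Definition vadd {n} (x y : vec n) : vec n := fun j => x j + y j.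
Definition vsub {n} (x y : vec n) : vec n := fun j => x j - y j.
Definition vscal {n} (t : R) (x : vec n) : vec n := fun j => t * x j.
Definition dot {n} (x y : vec n) : R := sumF n (fun j => x j * y j).
Definition vnorm {n} (x : vec n) : R := sqrt (dot x x).

Definition is_open {n} (G : vec n -> Prop) : Prop :=
  forall x, G x -> exists r, r > 0 /\ forall y, vnorm (vsub y x) < r -> G y.
Definition is_convex {n} (C : vec n -> Prop) : Prop :=
  forall x y t, C x -> C y -> 0 <= t <= 1 -> C (vadd x (vscal t (vsub y x))).

Definition quasiconvex_on {n} (G : vec n -> Prop) (f : vec n -> R) : Prop :=
  forall x y t, G x -> G y -> 0 <= t <= 1 ->
    f (vadd x (vscal t (vsub y x))) <= Rmax (f x) (f y).

Definition has_gradient {n} (G : vec n -> Prop) (f : vec n -> R) (x d : vec n) : Prop :=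
  forall eps, eps > 0 -> exists delta, delta > 0 /\
    forall h, G (vadd x h) -> vnorm h < delta ->
      Rabs (f (vadd x h) - f x - dot d h) <= eps * vnorm h.

Definition tangent_cone {n} (X : vec n -> Prop) (x : vec n) : vec n -> Prop :=
  fun v => exists (t : nat -> R) (d : nat -> vec n),
    (forall k, t k > 0) /\ Un_cv t 0 /\
    Un_cv (fun k => vnorm (vsub (d k) v)) 0 /\
    (forall k, X (vadd x (vscal (t k) (d k)))).

Definition polar {n} (C : vec n -> Prop) : vec n -> Prop :=
  fun y => forall c, C c -> dot c y <= 0.

Definition normal_cone {n} (X : vec n -> Prop) (x : vec n) : vec n -> Prop :=
  polar (tangent_cone X x).

Definition feasible {n m} (X : vec n -> Prop) (g : Fin.t m -> vec n -> R) : vec n -> Prop :=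
  fun x => X x /\ forall i, g i x <= 0.
Definition solution_set {n m} (X : vec n -> Prop) (f : vec n -> R)
    (g : Fin.t m -> vec n -> R) : vec n -> Prop :=
  fun x => feasible X g x /\ forall y, feasible X g y -> f x <= f y.

Definition active {n m} (g : Fin.t m -> vec n -> R) (x : vec n) (i : Fin.t m) : Prop :=
  g i x = 0.

Definition sum_active {n m} (g : Fin.t m -> vec n -> R) (xbar : vec n)
    (F : Fin.t m -> R) : R :=
  sumF m (fun i => if Req_EM_T (g i xbar) 0 then F i else 0).

Definition GMFCQ {n m} (X : vec n -> Prop) (g : Fin.t m -> vec n -> R)
    (gg : Fin.t m -> vec n -> vec n) (xbar : vec n) : Prop :=
  exists y, polar (normal_cone X xbar) y /\
    forall i, active g xbar i -> dot (gg i xbar) y < 0.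

(* KKT multiplier at xbar; gf, gg are the gradients of f, g_i *)
Definition KKT_multiplier {n m} (X : vec n -> Prop) (g : Fin.t m -> vec n -> R)
    (gf : vec n -> vec n) (gg : Fin.t m -> vec n -> vec n) (xbar : vec n)
    (lam : Fin.t m -> R) : Prop :=
  (forall i, lam i >= 0) /\ (forall i, lam i * g i xbar = 0) /\
  forall x, X x ->
    dot (fun j => gf xbar j + sum_active g xbar (fun i => lam i * gg i xbar j))
        (vsub x xbar) >= 0.

Definition Itilde {n m} (g : Fin.t m -> vec n -> R) (xbar : vec n)
    (lam : Fin.t m -> R) (i : Fin.t m) : Prop :=
  g i xbar = 0 /\ lam i > 0.

Definition X1 {n m} (X : vec n -> Prop) (g : Fin.t m -> vec n -> R) (xbar : vec n)
    (lam : Fin.t m -> R) : vec n -> Prop :=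
  fun x => X x /\
    (forall i, Itilde g xbar lam i -> g i x = 0) /\
    (forall i, ~ Itilde g xbar lam i -> g i x <= 0).

Definition lagrangian {n m} (f : vec n -> R) (g : Fin.t m -> vec n -> R)
    (xbar : vec n) (lam : Fin.t m -> R) (x : vec n) : R :=
  f x + sum_active g xbar (fun i => lam i * g i x).

(* Main.v *)
Require Import Defs.
From Stdlib Require Import Reals.
From Stdlib Require Vectors.Fin.
From Stdlib Require Import Lra Psatz FunctionalExtensionality.
Open Scope R_scope.

Lemma sumF_ext n (F G : Fin.t n -> R) : (forall i, F i = G i) -> sumF n F = sumF n G.
Proof.
  revert F G; induction n; intros F G H; simpl; auto.
  rewrite H, (IHn (fun i => F (Fin.FS i)) (fun i => G (Fin.FS i))); auto.
Qed.

Lemma sumF_plus n (F G : Fin.t n -> R) : sumF n (fun i => F i + G i) = sumF n F + sumF n G.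
Proof.
  revert F G; induction n; intros F G; simpl. lra.
  rewrite (IHn (fun i => F (Fin.FS i)) (fun i => G (Fin.FS i))); lra.
Qed.

Lemma sumF_scal n c (F : Fin.t n -> R) : sumF n (fun i => c * F i) = c * sumF n F.
Proof.
  revert F; induction n; intros F; simpl. lra.
  rewrite (IHn (fun i => F (Fin.FS i))); lra.
Qed.

Lemma sumF_zero n : sumF n (fun _ => 0) = 0.
Proof. induction n; simpl; auto. rewrite IHn; lra. Qed.

Lemma sumF_swap n m (F : Fin.t m -> Fin.t n -> R) :
  sumF n (fun j => sumF m (fun i => F i j)) = sumF m (fun i => sumF n (fun j => F i j)).
Proof.
  revert F; induction n; intros F; simpl.
  - symmetry; apply sumF_zero.
  - rewrite IHn. rewrite <- sumF_plus. reflexivity.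
Qed.

Lemma sumF_nonneg n (F : Fin.t n -> R) : (forall i, 0 <= F i) -> 0 <= sumF n F.
Proof.
  revert F; induction n; intros F H; simpl. lra.
  specialize (IHn (fun i => F (Fin.FS i)) (fun i => H _)). specialize (H Fin.F1). lra.
Qed.

Lemma sumF_nonpos n (F : Fin.t n -> R) : (forall i, F i <= 0) -> sumF n F <= 0.
Proof.
  revert F; induction n; intros F H; simpl. lra.
  specialize (IHn (fun i => F (Fin.FS i)) (fun i => H _)). specialize (H Fin.F1). lra.
Qed.

Lemma sumF_nonpos_zero n (F : Fin.t n -> R) : (forall i, F i <= 0) -> 0 <= sumF n F ->
  forall i, F i = 0.
Proof.
  revert F; induction n; intros F H Hs i.
  - inversion i.
  - simpl in Hs.
    pose proof (sumF_nonpos n (fun i => F (Fin.FS i)) (fun i => H _)) as H1.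
    pose proof (H Fin.F1) as H2.
    apply (Fin.caseS' i (fun i => F i = 0)).
    + lra.
    + intros p. apply (IHn (fun i => F (Fin.FS i))); auto. lra.
Qed.

Lemma dot_plus n (d a b : vec n) : dot d (fun j => a j + b j) = dot d a + dot d b.
Proof. unfold dot. rewrite <- sumF_plus. apply sumF_ext; intros; ring. Qed.

Lemma dot_scal n (d a : vec n) c : dot d (vscal c a) = c * dot d a.
Proof. unfold dot, vscal. rewrite <- sumF_scal. apply sumF_ext; intros; ring. Qed.

Lemma dot_self_nonneg n (v : vec n) : 0 <= dot v v.
Proof. unfold dot. apply sumF_nonneg. intros; nra. Qed.

Lemma vnorm_nonneg n (v : vec n) : 0 <= vnorm v.
Proof. unfold vnorm. apply sqrt_pos. Qed.

Lemma vnorm_scal n c (v : vec n) : vnorm (vscal c v) = Rabs c * vnorm v.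
Proof.
  unfold vnorm.
  replace (dot (vscal c v) (vscal c v)) with (Rsqr c * dot v v).
  - rewrite sqrt_mult_alt by apply Rle_0_sqr. rewrite sqrt_Rsqr_abs. reflexivity.
  - unfold dot, vscal, Rsqr. rewrite <- sumF_scal. apply sumF_ext; intros; ring.
Qed.

Lemma abs_le_both x b : Rabs x <= b -> -b <= x /\ x <= b.
Proof. intros H. pose proof (Rle_abs x). pose proof (Rle_abs (-x)). rewrite Rabs_Ropp in *. lra. Qed.

Lemma qc_grad n (G : vec n -> Prop) (g : vec n -> R) (xb z d : vec n) :
  is_convex G -> quasiconvex_on G g -> has_gradient G g xb d ->
  G xb -> G z -> g z <= g xb -> dot d (vsub z xb) <= 0.
Proof.
  intros Hc Hq Hd Gx Gz Hle.
  set (v := vsub z xb). set (N := vnorm v).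
  assert (HN : 0 <= N) by apply vnorm_nonneg.
  assert (Heps : forall eps, eps > 0 -> dot d v <= eps * N).
  { intros eps He. destruct (Hd eps He) as [delta [Hdel H]].
    set (t := Rmin 1 (delta / (2 * (N + 1)))).
    assert (Ht0 : 0 < t).
    { unfold t. apply Rmin_glb_lt. lra. apply Rdiv_lt_0_compat; lra. }
    assert (Ht1 : t <= 1) by apply Rmin_l.
    assert (Ht2 : t <= delta / (2 * (N + 1))) by apply Rmin_r.
    assert (HtN : t * N < delta).
    { apply Rle_lt_trans with (delta / (2 * (N + 1)) * N). nra.
      unfold Rdiv. rewrite Rinv_mult.
      assert (0 < / (N+1)) by (apply Rinv_0_lt_compat; lra).
      assert (N * / (N+1) < 1).
      { apply Rmult_lt_reg_r with (N+1). lra. rewrite Rmult_assoc, Rinv_l by lra. lra. }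
      assert (0 < /2) by lra. nra. }
    assert (Hnh : vnorm (vscal t v) = t * N).
    { rewrite vnorm_scal, Rabs_right by lra. reflexivity. }
    assert (HG : G (vadd xb (vscal t v))) by (apply Hc; auto; lra).
    specialize (H (vscal t v) HG). rewrite Hnh in H. specialize (H HtN).
    assert (Hq' := Hq xb z t Gx Gz (conj (Rlt_le _ _ Ht0) Ht1)).
    fold v in Hq'. rewrite Rmax_left in Hq' by lra.
    rewrite dot_scal in H.
    apply abs_le_both in H.
    assert (dot d v * t <= eps * N * t) by nra.
    apply Rmult_le_reg_r with t; lra. }
  destruct (Rle_or_lt (dot d v) 0) as [Hle0|Hgt]; auto.
  set (e := dot d v / (2 * (N + 1))).
  assert (He : e > 0) by (apply Rdiv_lt_0_compat; lra).
  specialize (Heps e He).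
  assert (e * (2 * (N+1)) = dot d v) by (unfold e; field; lra).
  nra.
Qed.

Lemma kkt_expand n m (g : Fin.t m -> vec n -> R) (gf : vec n) (gg : Fin.t m -> vec n -> vec n)
  (xbar v : vec n) (lam : Fin.t m -> R) :
  dot (fun j => gf j + sum_active g xbar (fun i => lam i * gg i xbar j)) v =
  dot gf v + sumF m (fun i => if Req_EM_T (g i xbar) 0 then lam i * dot (gg i xbar) v else 0).
Proof.
  unfold dot, sum_active.
  transitivity (sumF n (fun j => gf j * v j) + sumF m (fun i => sumF n (fun j =>
     if Req_EM_T (g i xbar) 0 then lam i * (gg i xbar j * v j) else 0))).
  - rewrite <- sumF_swap, <- sumF_plus. apply sumF_ext; intro j.
    rewrite Rmult_plus_distr_r; f_equal. rewrite Rmult_comm, <- sumF_scal.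
    apply sumF_ext; intro i. destruct (Req_EM_T (g i xbar) 0); ring.
  - f_equal. apply sumF_ext; intro i. destruct (Req_EM_T (g i xbar) 0).
    + apply sumF_scal.
    + apply sumF_zero.
Qed.

Theorem lemma7 (n m : nat) (Gamma X : vec n -> Prop)
  (f : vec n -> R) (g : Fin.t m -> vec n -> R)
  (gf : vec n -> vec n) (gg : Fin.t m -> vec n -> vec n)
  (xbar : vec n) (lam : Fin.t m -> R) :
  is_open Gamma -> is_convex Gamma ->
  is_convex X -> (forall x, X x -> Gamma x) ->
  (forall x, Gamma x -> has_gradient Gamma f x (gf x)) ->
  (forall i x, Gamma x -> has_gradient Gamma (g i) x (gg i x)) ->
  quasiconvex_on Gamma f -> (forall i, quasiconvex_on Gamma (g i)) ->
  solution_set X f g xbar ->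
  GMFCQ X g gg xbar ->
  KKT_multiplier X g gf gg xbar lam ->
  (forall x, solution_set X f g x -> X1 X g xbar lam x) /\
  (forall x y, solution_set X f g x -> solution_set X f g y ->
     lagrangian f g xbar lam x = lagrangian f g xbar lam y).
Proof.
  intros HGo HGc HXc HXG Hf Hg Hfq Hgq [[HXb Hgb] Hmin] [y [_ Hy]] [Hlam0 [Hcs Hkkt]].
  assert (HGb : Gamma xbar) by auto.
  assert (Hzero : forall x, solution_set X f g x -> forall i, Itilde g xbar lam i ->
            dot (gg i xbar) (vsub x xbar) = 0).
  { intros x [[HXx Hgx] Hminx] i [Hact Hlpos].
    assert (HGx : Gamma x) by auto.
    assert (Hfx : f x <= f xbar) by (apply Hminx; split; auto).
    pose proof (Hkkt x HXx) as HK. rewrite kkt_expand in HK.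
    pose proof (qc_grad n Gamma f xbar x (gf xbar) HGc Hfq (Hf xbar HGb) HGb HGx Hfx) as H1.
    set (T := fun i => if Req_EM_T (g i xbar) 0 then lam i * dot (gg i xbar) (vsub x xbar) else 0) in HK.
    assert (HT : forall i, T i <= 0).
    { intros k. unfold T. destruct (Req_EM_T (g k xbar) 0) as [e|e]; [|lra].
      assert (dot (gg k xbar) (vsub x xbar) <= 0).
      { apply (qc_grad n Gamma (g k)); auto. rewrite e; auto. }
      specialize (Hlam0 k). nra. }
    pose proof (sumF_nonpos_zero m T HT ltac:(lra) i) as Hi.
    unfold T in Hi. destruct (Req_EM_T (g i xbar) 0) as [e|e]; [|contradiction].
    apply Rmult_integral in Hi. destruct Hi; auto. lra. }
  assert (Part1 : forall x, solution_set X f g x -> X1 X g xbar lam x).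
  { intros x Hx. pose proof Hx as [[HXx Hgx] Hminx].
    assert (HGx : Gamma x) by auto.
    split; [auto|split]; [|intros; auto].
    intros i Hit. pose proof (Hzero x Hx i Hit) as Hz.
    destruct (Req_dec (g i x) 0) as [|Hne]; auto. exfalso.
    assert (Hneg : g i x < 0) by (specialize (Hgx i); lra).
    destruct (Hg i x HGx 1 ltac:(lra)) as [delta1 [Hd1 H1]].
    destruct (HGo x HGx) as [r [Hr0 Hr]].
    set (a := dot (gg i x) y). set (N := vnorm y).
    assert (HN : 0 <= N) by apply vnorm_nonneg.
    set (K := Rabs a + N + 1).
    assert (Ha : 0 <= Rabs a) by apply Rabs_pos.
    set (mm := Rmin (- g i x) (Rmin r delta1)).
    assert (Hm1 : mm <= - g i x) by apply Rmin_l.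
    assert (Hm2 : mm <= r) by (eapply Rle_trans; [apply Rmin_r | apply Rmin_l]).
    assert (Hm3 : mm <= delta1) by (eapply Rle_trans; [apply Rmin_r | apply Rmin_r]).
    assert (Hm0 : 0 < mm).
    { unfold mm. apply Rmin_glb_lt; [lra|]. apply Rmin_glb_lt; lra. }
    set (s := mm / (2 * K)).
    assert (HsK : s * K = mm / 2) by (unfold s; field; unfold K; lra).
    assert (Hs0 : 0 < s) by (apply Rdiv_lt_0_compat; unfold K; lra).
    set (w := vscal (- s) y).
    assert (Hnw : vnorm w = s * N).
    { unfold w. rewrite vnorm_scal, Rabs_Ropp, Rabs_right by lra. reflexivity. }
    assert (HsN : s * N < mm) by (unfold K in HsK; nra).
    assert (HG : Gamma (vadd x w)).
    { apply Hr. replace (vsub (vadd x w) x) with w.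
      - lra.
      - apply functional_extensionality; intro j. unfold vsub, vadd; ring. }
    specialize (H1 w HG ltac:(lra)).
    apply abs_le_both in H1.
    assert (Hdw : dot (gg i x) w = - s * a) by (unfold w; rewrite dot_scal; reflexivity).
    assert (Hsa : - s * a <= s * Rabs a).
    { pose proof (Rle_abs (-a)). rewrite Rabs_Ropp in *. nra. }
    assert (Hgw : g i (vadd x w) <= g i xbar).
    { destruct Hit as [Hact _]. rewrite Hact. unfold K in HsK. nra. }
    pose proof (qc_grad n Gamma (g i) xbar (vadd x w) (gg i xbar) HGc (Hgq i)
                  (Hg i xbar HGb) HGb HG Hgw) as Hq.
    replace (vsub (vadd x w) xbar) with (fun j => vsub x xbar j + w j) in Hq
      by (apply functional_extensionality; intro j; unfold vsub, vadd; ring).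
    rewrite dot_plus, Hz in Hq. unfold w in Hq. rewrite dot_scal in Hq.
    destruct Hit as [Hact _].
    specialize (Hy i Hact). nra. }
  split; auto.
  assert (HL : forall x, solution_set X f g x -> lagrangian f g xbar lam x = f x).
  { intros x Hx. destruct (Part1 x Hx) as [_ [H1 _]]. unfold lagrangian, sum_active.
    rewrite (sumF_ext m _ (fun _ => 0)). rewrite sumF_zero; ring.
    intro i. destruct (Req_EM_T (g i xbar) 0) as [e|e]; auto.
    destruct (Rle_lt_or_eq_dec 0 (lam i)) as [Hp|Hp].
    - specialize (Hlam0 i); lra.
    - rewrite (H1 i (conj e Hp)). ring.
    - rewrite <- Hp. ring. }
  intros x z Hx Hz. rewrite (HL x Hx), (HL z Hz).
  destruct Hx as [Hfx Hmx]. destruct Hz as [Hfz Hmz].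
  specialize (Hmx z Hfz). specialize (Hmz x Hfx). lra.
Qed.
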